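(* Let $n\geq 2$ and let $\mathscr{R}$ be a family of standard dyadic rectangles in $\mathbb{R}^n$. Assume there exist an integer $1\leq d\leq n-1$ and constants $c>0$ and $c'\geq 1$ (depending only on $n$ and $d$) such that, for every sufficiently large $k\in\mathbb{N}$, there exist measurable sets $\Theta_k, Y_k\subseteq\mathbb{R}^n$ with: (i) $\Theta_k\subseteq Y_k$; (ii) $|Y_k|\geq c\cdot 2^{dk}k^d|\Theta_k|$; (iii) for every $x\in Y_k$, $M_{\mathscr{R}}\chi_{\Theta_k}(x)\geq c'\,2^{-dk}$. Then for every Orlicz function $\Phi$ satisfying $\Phi=o(\Phi_d)$ at $\infty$, the operator $M_{\mathscr{R}}$ does not satisfy a weak $L^\Phi$ inequality. In particular, $M_{\mathscr{R}}$ does not satisfy a weak $(1,1)$ inequality.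
   Context: A standard rectangle in $\mathbb{R}^n$ is a set $[0,\alpha_1]\times\cdots\times[0,\alpha_n]$ with $0<\alpha_i\leq 1$; it is dyadic if each $\alpha_i=2^{-m_i}$ with $m_i\in\mathbb{N}=\{0,1,2,\dots\}$. For a family $\mathscr{R}$ of standard rectangles and measurable $f$, $M_{\mathscr{R}}f(x):=\sup\{\frac{1}{|R|}\int_{\tau(R)}|f| : R\in\mathscr{R},\ \tau \text{ a translation},\ x\in\tau(R)\}$, where $|\cdot|$ is Lebesgue measure and $\chi_A$ is the indicator of $A$. An Orlicz function is a convex increasing $\Phi:[0,\infty)\to[0,\infty)$ with $\Phi(0)=0$; $L^\Phi(\mathbb{R}^n)$ is the set of measurable $f$ with $\Phi(|f|)\in L^1$. $M_{\mathscr{R}}$ satisfies a weak $L^\Phi$ inequality if there is $C>0$ such that $|\{M_{\mathscr{R}}f>\lambda\}|\leq\int_{\mathbb{R}^n}\Phi(C|f|/\lambda)$ for all $\lambda>0$ and all $f\in L^\Phi(\mathbb{R}^n)$; weak $(1,1)$ means this with $\Phi(t)=t$. For $d>0$, $\Phi_d(t):=t(1+\log_+^d t)$, where $\log_+t=\max(\log t,0)$. *)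

(* Defs.v *)
From HB Require Import structures.
From mathcomp Require Import all_boot all_order all_algebra.
From mathcomp Require Import all_classical all_reals all_analysis.
Set Implicit Arguments. Unset Strict Implicit. Unset Printing Implicit Defensive.
Import Order.TTheory GRing.Theory Num.Theory.
Local Open Scope classical_set_scope.
Local Open Scope ring_scope.

Section Defs.
Variables (R : realType) (n : nat).
Implicit Types (a b t x alpha : 'rV[R]_n) (A : set 'rV[R]_n).

Definition box a b : set 'rV[R]_n :=
  [set x | forall i : 'I_n, a ord0 i <= x ord0 i <= b ord0 i].

Definition boxvol a b : R := \prod_(i < n) (b ord0 i - a ord0 i).

Definition leb_outer A : \bar R :=
  ereal_inf [set s : \bar R | exists (a b : nat -> 'rV[R]_n),
    [/\ (forall k (i : 'I_n), a k ord0 i <= b k ord0 i),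
        A `<=` \bigcup_k box (a k) (b k) &
        s = (\sum_(k <oo) (boxvol (a k) (b k))%:E)%E]].

Definition leb_measurable A : Prop :=
  forall X : set 'rV[R]_n,
    leb_outer X = (leb_outer (X `&` A) + leb_outer (X `&` ~` A))%E.

Definition leb_measurable_fun (f : 'rV[R]_n -> R) : Prop :=
  forall c : R, leb_measurable [set x | c < f x].

Definition leb_integral (g : 'rV[R]_n -> \bar R) : \bar R :=
  ereal_sup [set s : \bar R | exists (m : nat) (c : nat -> R)
      (E : nat -> set 'rV[R]_n),
    [/\ (forall i, 0 <= c i), (forall i, leb_measurable (E i)),
        (forall x, (\sum_(i < m) (c i * \1_(E i) x)%:E <= g x)%E) &
        s = (\sum_(i < m) (c i)%:E * leb_outer (E i))%E]].

(* standard rectangle [0,alpha_1] x ... x [0,alpha_n], 0 < alpha_i <= 1,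
   represented by its side-length vector alpha *)
Definition standard_rect alpha : Prop :=
  forall i : 'I_n, 0 < alpha ord0 i <= 1.

Definition dyadic_rect alpha : Prop :=
  exists m : 'I_n -> nat, forall i : 'I_n, alpha ord0 i = (2%:R ^- (m i)).

(* the maximal operator M_R: translate tau(R) of the rectangle with sides alpha
   is the box [t, t + alpha]; |R| = prod alpha_i *)
Definition max_op (Rs : set 'rV[R]_n) (f : 'rV[R]_n -> R) (x : 'rV[R]_n) : \bar R :=
  ereal_sup [set s : \bar R | exists alpha t,
    [/\ Rs alpha, box t (t + alpha) x &
        s = ((\prod_(i < n) alpha ord0 i)^-1)%:E *
            leb_integral (fun y => (`|f y| * \1_(box t (t + alpha)) y)%:E)]%E].

Definition orlicz (Phi : R -> R) : Prop :=
  [/\ Phi 0 = 0,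
      (forall s u, 0 <= s -> s <= u -> Phi s <= Phi u) &
      (forall s u l, 0 <= s -> 0 <= u -> 0 <= l <= 1 ->
          Phi (l * s + (1 - l) * u) <= l * Phi s + (1 - l) * Phi u)].

Definition weak_Lphi (Rs : set 'rV[R]_n) (Phi : R -> R) : Prop :=
  exists C : R, 0 < C /\
    forall (lam : R) (f : 'rV[R]_n -> R), 0 < lam ->
      leb_measurable_fun f ->
      (leb_integral (fun x => (Phi `|f x|)%:E) < +oo)%E ->
      (leb_outer [set x | (lam%:E < max_op Rs f x)%E] <=
        leb_integral (fun x => (Phi (C * `|f x| / lam))%:E))%E.

End Defs.

Definition logp {R : realType} (t : R) : R := Num.max (ln t) 0.
Definition Phi_d {R : realType} (d : nat) (t : R) : R := t * (1 + logp t ^+ d).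

Definition little_o_Phi_d {R : realType} (d : nat) (Phi : R -> R) : Prop :=
  forall eps : R, 0 < eps -> exists T : R, forall t : R, T <= t ->
    `|Phi t| <= eps * `|Phi_d d t|.

(* Main.v *)
Require Import Defs.
From HB Require Import structures.
From mathcomp Require Import all_boot all_order all_algebra.
From mathcomp Require Import all_classical all_reals all_analysis.
From mathcomp Require Import ring lra.
Import Order.TTheory GRing.Theory Num.Theory.
Local Open Scope classical_set_scope.
Local Open Scope ring_scope.

Lemma outer_ge0 (R : realType) (n : nat) (A : set 'rV[R]_n) :
  (0 <= leb_outer A)%E.
Proof.
apply: le_ereal_inf_tmp => s [a [b [hab _ ->]]].
apply: nneseries_ge0 => k _ _; rewrite lee_fin.
by apply: prodr_ge0 => i _; rewrite subr_ge0.
Qed.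

Lemma outer_le (R : realType) (n : nat) (A B : set 'rV[R]_n) :
  A `<=` B -> (leb_outer A <= leb_outer B)%E.
Proof.
move=> AB; apply: ereal_inf_le_tmp => s [a [b [hab hB ->]]].
exists a, b; split => //; exact: subset_trans hB.
Qed.

Lemma outer0 (R : realType) (n : nat) : (0 < n)%N ->
  leb_outer (set0 : set 'rV[R]_n) = 0%E.
Proof.
move=> n0; apply/eqP; rewrite eq_le outer_ge0 andbT.
apply: ereal_inf_lbound; exists (fun _ => 0), (fun _ => 0); split => //.
rewrite eseries0 // => k _ _.
by rewrite /boxvol (bigD1 (Ordinal n0)) //= subrr mul0r.
Qed.

Lemma meas0 (R : realType) (n : nat) : (0 < n)%N ->
  leb_measurable (set0 : set 'rV[R]_n).
Proof.
move=> n0 X; rewrite setI0 outer0 // add0e setC0 setIT //.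
Qed.

Lemma measT (R : realType) (n : nat) : (0 < n)%N ->
  leb_measurable (setT : set 'rV[R]_n).
Proof.
move=> n0 X; rewrite setIT setCT setI0 outer0 // adde0 //.
Qed.

Lemma simple_bound (R : realType) (n : nat) (m : nat) (c : nat -> R)
  (E : nat -> set 'rV[R]_n) :
  (0 < n)%N -> (forall i, 0 <= c i) -> (forall i, leb_measurable (E i)) ->
  forall (a : R) (X : set 'rV[R]_n), 0 <= a ->
  (forall x, X x -> \sum_(i < m) c i * \1_(E i) x <= a) ->
  (\sum_(i < m) (c i)%:E * leb_outer (X `&` E i) <= a%:E * leb_outer X)%E.
Proof.
move=> n0 c0 Em; elim: m => [|m IH] a X a0 hX.
  by rewrite big_ord0; apply: mule_ge0 => //; exact: outer_ge0.
rewrite big_ord_recr /=.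
set F := E m; set cm := c m.
have split_i : forall i : 'I_m, ((c i)%:E * leb_outer (X `&` E i) =
   (c i)%:E * leb_outer ((X `&` F) `&` E i) +
   (c i)%:E * leb_outer ((X `&` ~` F) `&` E i))%E.
  move=> i; rewrite (Em m (X `&` E i)) ge0_muleDr ?outer_ge0 //.
  by rewrite -!setIA (setIC (E i)) (setIC (E i)).
rewrite (eq_bigr _ (fun i _ => split_i i)) big_split /=.
have hsum0 : forall x, 0 <= \sum_(i < m) c i * \1_(E i) x.
  by move=> x; apply: sumr_ge0 => i _; apply: mulr_ge0 => //; rewrite indicE.
have hC : (\sum_(i < m) (c i)%:E * leb_outer ((X `&` ~` F) `&` E i) <=
     a%:E * leb_outer (X `&` ~` F))%E.
  apply: IH => // x [Xx nFx].
  have := hX x Xx; rewrite big_ord_recr /= /cm indicE.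
  by rewrite memNset // mulr0 addr0.
rewrite (Em m X).
case: (lerP cm a) => hca.
  have hB : (\sum_(i < m) (c i)%:E * leb_outer ((X `&` F) `&` E i) <=
     (a - cm)%:E * leb_outer (X `&` F))%E.
    apply: IH; first by rewrite subr_ge0.
    move=> x [Xx Fx]; have := hX x Xx; rewrite big_ord_recr /= /cm indicE.
    by rewrite mem_set // mulr1 lerBrDr.
  have cm0 : 0 <= cm := c0 m.
  set u := leb_outer (X `&` F); set v := leb_outer (X `&` ~` F).
  have u0 : (0 <= u)%E by exact: outer_ge0.
  have v0 : (0 <= v)%E by exact: outer_ge0.
  have ea : ((a - cm)%:E + cm%:E = a%:E)%E by rewrite -EFinD subrK.
  have e1 : (a%:E * (u + v) = ((a - cm)%:E * u + a%:E * v) + cm%:E * u)%E.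
    rewrite ge0_muleDr // -addeA [(a%:E * v + _)%E]addeC addeA.
    rewrite -ge0_muleDl ?lee_fin ?subr_ge0 //; congr (_ + _); congr (_ * _)%E; exact: esym ea.
  rewrite e1.
  by apply: leeD => //; apply: leeD.
have XF0 : X `&` F = set0.
  apply/seteqP; split => // x [Xx Fx].
  have := hX x Xx; rewrite big_ord_recr /= indicE mem_set // mulr1.
  move=> h; have h2 : c m <= \sum_(i < m) c i * \1_(E i) x + c m.
    by rewrite lerDr.
  by have := lt_le_trans hca (le_trans h2 h); rewrite ltxx.
rewrite XF0 outer0 // mule0 adde0 add0e.
rewrite big1 ?add0e // => i _.
by rewrite set0I outer0 // mule0.
Qed.

Lemma integral_bound (R : realType) (n : nat) (Th : set 'rV[R]_n) (a : R)
  (g : 'rV[R]_n -> \bar R) :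
  (0 < n)%N -> leb_measurable Th -> 0 <= a ->
  (forall x, Th x -> (g x <= a%:E)%E) -> (forall x, ~ Th x -> (g x <= 0)%E) ->
  (leb_integral g <= a%:E * leb_outer Th)%E.
Proof.
move=> n0 mTh a0 gTh gnTh.
apply: ge_ereal_sup => s [m [c [E [c0 Em Hle ->]]]].
have h1 := @simple_bound R n m c E n0 c0 Em a Th a0.
have h2 := @simple_bound R n m c E n0 c0 Em 0 (~` Th) (lexx 0).
have e : forall i : 'I_m, ((c i)%:E * leb_outer (E i) =
    (c i)%:E * leb_outer (Th `&` E i) + (c i)%:E * leb_outer (~` Th `&` E i))%E.
  move=> i; rewrite (mTh (E i)) ge0_muleDr ?outer_ge0 //.
  by rewrite (setIC Th) (setIC (~` Th)).
rewrite (eq_bigr _ (fun i _ => e i)) big_split /=.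
have -> : (a%:E * leb_outer Th = a%:E * leb_outer Th + 0%:E * leb_outer (~` Th))%E.
  by rewrite mul0e adde0.
apply: leeD.
  apply: h1 => x Thx; rewrite -lee_fin -sumEFin; exact: le_trans (Hle x) (gTh x Thx).
apply: h2 => x Thx; rewrite -lee_fin -sumEFin; exact: le_trans (Hle x) (gnTh x Thx).
Qed.

Lemma ind_meas (R : realType) (n : nat) (Th : set 'rV[R]_n) :
  (0 < n)%N -> leb_measurable Th -> leb_measurable_fun (\1_Th).
Proof.
move=> n0 mTh r.
case: (ltrP r 0) => [r0|r0].
  rewrite (_ : [set x | r < \1_Th x] = setT); first exact: measT.
  by apply/seteqP; split => // x _ /=; rewrite indicE; exact: lt_le_trans r0 (ler0n _ _).
case: (ltrP r 1) => [r1|r1].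
  rewrite (_ : [set x | r < \1_Th x] = Th) //.
  apply/seteqP; split => x /=; rewrite indicE.
    by case: (boolP (x \in Th)) => [/set_mem //|_]; rewrite ltNge r0.
  by move=> Thx; rewrite mem_set.
rewrite (_ : [set x | r < \1_Th x] = set0); first exact: meas0.
apply/seteqP; split => x //=; rewrite indicE.
by case: (x \in Th) => /=; rewrite ltNge ?r1 ?r0.
Qed.

Lemma weak_conseq (R : realType) (n : nat) (Rs : set 'rV[R]_n)
    (d : nat) (c c' : R) (Phi : R -> R) (k0 : nat) :
  (0 < n)%N -> 0 < c' ->
  (forall k : nat, (k0 <= k)%N ->
     exists Theta Y : set 'rV[R]_n,
       [/\ leb_measurable Theta /\ leb_measurable Y,
           (0 < leb_outer Theta < +oo)%E,
           Theta `<=` Y,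
           ((c * 2%:R ^+ (d * k) * k%:R ^+ d)%:E * leb_outer Theta <= leb_outer Y)%E &
           forall x, Y x ->
             ((c' * 2%:R ^- (d * k))%:E <= max_op Rs (\1_Theta) x)%E]) ->
  Phi 0 = 0 -> (forall t, 0 <= t -> 0 <= Phi t) -> weak_Lphi Rs Phi ->
  exists C, 0 < C /\ forall k, (k0 <= k)%N ->
    c * 2%:R ^+ (d * k) * k%:R ^+ d <= Phi (C * 2 / c' * 2%:R ^+ (d * k)).
Proof.
move=> n0 c'0 hyp P0 Pge [C [C0 HC]]; exists C; split => // k kk.
have [Th [Y [[mTh mY] /andP[Th0 Thoo] ThY hY hM]]] := hyp k kk.
have p0 : 0 < 2%:R ^+ (d * k) :> R by apply: exprn_gt0.
set e := 2%:R ^- (d * k) : R.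
have e0 : 0 < e by rewrite /e invr_gt0.
set lam := c' * e / 2.
have ce0 : 0 < c' * e by apply: mulr_gt0.
have lam0 : 0 < lam by rewrite /lam; lra.
move: Th0 Thoo hY hM; case Eth: (leb_outer Th) => [r| |] // r0 _ hY hM.
rewrite lte_fin in r0.
have H := HC lam (\1_Th) lam0 (@ind_meas R n Th n0 mTh).
have Hint : (leb_integral (fun x => (Phi `|\1_Th x|)%:E) < +oo)%E.
  apply: le_lt_trans (_ : ((Phi 1)%:E * r%:E < +oo)%E); last by rewrite -EFinM ltry.
  rewrite -Eth; apply: integral_bound => //; first exact: Pge.
    by move=> x Thx; rewrite indicE mem_set // normr1.
  by move=> x Thx; rewrite indicE memNset // normr0 P0.
have {}H := H Hint.
have HI : (leb_integral (fun x => (Phi (C * `|\1_Th x| / lam))%:E) <=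
      (Phi (C / lam))%:E * r%:E)%E.
  rewrite -Eth; apply: integral_bound => //.
  - apply: Pge; apply: divr_ge0; lra.
  - by move=> x Thx; rewrite indicE mem_set // normr1 mulr1.
  - by move=> x Thx; rewrite indicE memNset // normr0 mulr0 mul0r P0.
have HY : (leb_outer Y <= leb_outer [set x | (lam%:E < max_op Rs \1_Th x)%E])%E.
  apply: outer_le => x Yx; apply: lt_le_trans (hM x Yx).
  rewrite lte_fin /lam; move: ce0; rewrite /e; lra.
have := le_trans hY (le_trans HY (le_trans H HI)).
rewrite -!EFinM lee_fin ler_pM2r //.
have -> : C / lam = C * 2 / c' * 2%:R ^+ (d * k); last by [].
rewrite /lam /e; field.
by apply/andP; split; apply: lt0r_neq0.
Qed.

Theorem mainTheorem1 (R : realType) (n : nat) (Rs : set 'rV[R]_n)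
    (d : nat) (c c' : R) :
  (2 <= n)%N ->
  (forall alpha, Rs alpha -> standard_rect alpha /\ dyadic_rect alpha) ->
  (1 <= d)%N -> (d <= n - 1)%N -> 0 < c -> 1 <= c' ->
  (exists k0 : nat, forall k : nat, (k0 <= k)%N ->
     exists Theta Y : set 'rV[R]_n,
       [/\ leb_measurable Theta /\ leb_measurable Y,
           (0 < leb_outer Theta < +oo)%E,
           Theta `<=` Y,
           ((c * 2%:R ^+ (d * k) * k%:R ^+ d)%:E * leb_outer Theta <= leb_outer Y)%E &
           forall x, Y x ->
             ((c' * 2%:R ^- (d * k))%:E <= max_op Rs (\1_Theta) x)%E]) ->
  (forall Phi : R -> R, orlicz Phi -> little_o_Phi_d d Phi ->
     ~ weak_Lphi Rs Phi)
  /\ ~ weak_Lphi Rs id.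
Proof.
move=> n2 _ d1 _ c0 c'1 [k0 hyp].
have n0 : (0 < n)%N by apply: leq_trans n2.
have c'0 : 0 < c' by apply: lt_le_trans ltr01 c'1.
have pick : forall B : R, exists k : nat,
    [/\ (k0 <= k)%N, 1 <= k%:R :> R & B < k%:R].
  move=> B; exists (maxn (maxn k0 1) (Num.truncn B).+1); split.
  - by rewrite !leq_max leqnn.
  - by rewrite ler1n !leq_max orbT.
  - apply: lt_le_trans (truncnS_gt B) _; rewrite ler_nat; exact: leq_maxr.
have p2 : forall k, 0 < 2%:R ^+ (d * k) :> R by move=> k; apply: exprn_gt0.
have kdk : forall k : nat, 1 <= k%:R :> R -> k%:R <= k%:R ^+ d :> R.
  by move=> k k1; apply: ler_eXnr.
split; last first.
  move=> hw.
  have [C [C0 HC]] := @weak_conseq R n Rs d c c' id k0 n0 c'0 hyp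
     erefl (fun t t0 => t0) hw.
  set K := C * 2 / c'.
  have K0 : 0 < K by rewrite /K; apply: divr_gt0 => //; lra.
  have [k [kk k1 kB]] := pick (K / c).
  have H := HC k kk; rewrite -/K /= in H.
  have hk := kdk k k1.
  have P0 := p2 k.
  have H2 : c * k%:R ^+ d <= K.
    by rewrite -(ler_pM2r P0); move: H; rewrite mulrAC.
  move: kB; rewrite ltr_pdivrMr // => kB.
  have : c * k%:R <= c * k%:R ^+ d by rewrite ler_pM2l.
  lra.
move=> Phi [P0 Pmon _] ho hw.
have Pge : forall t, 0 <= t -> 0 <= Phi t by move=> t t0; rewrite -P0; apply: Pmon.
have [C [C0 HC]] := @weak_conseq R n Rs d c c' Phi k0 n0 c'0 hyp P0 Pge hw.
set K := C * 2 / c'.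
have K0 : 0 < K by rewrite /K; apply: divr_gt0 => //; lra.
have ln20 : 0 <= ln (2 : R) by apply/ltW/ln_gt0; lra.
set L := `|ln K| + d%:R * ln 2.
have L0 : 0 <= L by rewrite /L; apply: addr_ge0 => //; apply: mulr_ge0.
set Ld := L ^+ d.
have Ld0 : 0 <= Ld by apply: exprn_ge0.
set eps := c / (2 * K * (1 + Ld)).
have eps0 : 0 < eps by rewrite /eps; apply: divr_gt0 => //;
  apply: mulr_gt0; lra.
have [T HT] := ho eps eps0.
have [k [kk k1 kB]] := pick (T / K).
have H := HC k kk; rewrite -/K in H.
set P := 2%:R ^+ (d * k) : R.
have P0' : 0 < P := p2 k.
set t := K * P.
have kP : k%:R <= P.
  rewrite /P -natrX ler_nat; apply: ltnW; apply: leq_trans (ltn_expl k (isT : (1 < 2)%N)) _.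
  by apply: leq_pexp2l => //; rewrite leq_pmull.
have tT : T <= t.
  move: kB; rewrite ltr_pdivrMr // => kB.
  have : K * k%:R <= K * P by rewrite ler_pM2l.
  rewrite /t; lra.
have := HT t tT.
have t0 : 0 < t by apply: mulr_gt0.
have lnt : ln t = ln K + (d * k)%:R * ln 2.
  by rewrite /t /P lnM ?posrE // lnXn // mulr_natl.
have hlog : logp t <= k%:R * L.
  rewrite /logp ge_max; apply/andP; split; last by apply: mulr_ge0 => //; lra.
  rewrite lnt natrM /L mulrDr.
  have a0 : 0 <= `|ln K| by [].
  have : ln K <= `|ln K| by apply: ler_norm.
  have : `|ln K| <= k%:R * `|ln K| by rewrite ler_peMl.
  have : (d%:R * k%:R) * ln 2 = k%:R * (d%:R * ln 2) :> R by rewrite mulrAC mulrC.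
  lra.
have lg0 : 0 <= logp t by rewrite /logp le_max lexx orbT.
set kd := k%:R ^+ d : R.
have kd1 : 1 <= kd by rewrite /kd; apply: exprn_ege1.
have hlg : logp t ^+ d <= kd * Ld.
  rewrite /kd /Ld -exprMn; apply: lerXn2r; rewrite ?nnegrE //.
  by apply: mulr_ge0 => //; lra.
have lgd0 : 0 <= logp t ^+ d by apply: exprn_ge0.
have hPd : `|Phi_d d t| = t * (1 + logp t ^+ d).
  by rewrite /Phi_d ger0_norm //; apply: mulr_ge0; lra.
rewrite hPd.
have hPhi : Phi t <= `|Phi t| by apply: ler_norm.
have h1 : t * (1 + logp t ^+ d) <= t * (kd * (1 + Ld)).
  rewrite ler_pM2l //.
  have : kd * Ld + 1 <= kd * Ld + kd by rewrite lerD2l.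
  rewrite mulrDr mulr1; lra.
have h2 : eps * (t * (kd * (1 + Ld))) = c * P * kd / 2.
  rewrite /eps /t; field.
  by apply/andP; split; apply: lt0r_neq0 => //; lra.
have h3 : eps * (t * (1 + logp t ^+ d)) <= eps * (t * (kd * (1 + Ld))).
  by rewrite ler_pM2l.
have hpos : 0 < c * P * kd by apply: mulr_gt0; [apply: mulr_gt0|lra].
rewrite /kd /P in h2 h3 hpos.
move: H; rewrite -/t => H.
lra.
Qed.
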